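(* Let $T:\mathcal{H}\to Y$ be a linear operator from a (real or complex) Hilbert space $\mathcal{H}$ to a Banach space $Y$. If $T$ maps every orthonormal sequence of $\mathcal{H}$ onto a limited subset of $Y$, then $T$ is bounded.
   Context: A subset $A$ of a normed space $Y$ is called limited if every weak$^*$-null sequence $(f_n)$ in the dual $Y'$ converges to zero uniformly on $A$, i.e. $\sup_{a\in A}|f_n(a)|\to 0$. *)

(* Defs.v *)
From HB Require Import structures.
From mathcomp Require Import all_boot all_order all_algebra.
From mathcomp Require Import all_classical all_reals all_analysis.
From mathcomp Require Import complex.
Set Implicit Arguments. Unset Strict Implicit. Unset Printing Implicit Defensive.
Import Order.TTheory GRing.Theory Num.Theory.
Import numFieldNormedType.Exports.
Local Open Scope classical_set_scope.
Local Open Scope ring_scope.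

Definition Cx (R : realType) : numClosedFieldType := (R[i])%C.

Section Defs.
Variables (K : numFieldType) (conj : K -> K).

Definition is_inner_product (H : normedModType K) (ip : H -> H -> K) : Prop :=
  [/\ forall (a : K) (x y z : H), ip (a *: x + y) z = a * ip x z + ip y z,
      forall x y : H, ip y x = conj (ip x y)
    & forall x : H, ip x x = `|x| ^+ 2].

(* A Hilbert space is a complete normed space (H : completeNormedModType K)
   whose norm is induced by an inner product. *)

Definition orthonormal_seq (H : normedModType K) (ip : H -> H -> K)
    (e : nat -> H) : Prop :=
  forall i j : nat, ip (e i) (e j) = (i == j)%:R.

Definition dual_elem (Y : normedModType K) (f : Y -> K) : Prop :=
  (forall (a : K) (x y : Y), f (a *: x + y) = a * f x + f y) /\ continuous f.

Definition weak_star_null (Y : normedModType K) (f : nat -> Y -> K) : Prop :=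
  (forall n, dual_elem (f n)) /\ (forall y : Y, (fun n => f n y) @ \oo --> 0).

Definition limited (Y : normedModType K) (A : set Y) : Prop :=
  forall f : nat -> Y -> K, weak_star_null f ->
    forall eps : K, 0 < eps ->
      \forall n \near \oo, forall a, A a -> `|f n a| <= eps.

Definition bounded_op (H Y : normedModType K) (T : H -> Y) : Prop :=
  exists M : K, forall x : H, `|T x| <= M * `|x|.

End Defs.

(* Main.v *)
Require Import Defs.
From HB Require Import structures.
From mathcomp Require Import all_boot all_order all_algebra.
From mathcomp Require Import all_classical all_reals all_analysis.
From mathcomp Require Import complex.
From mathcomp Require Import ring.
Set Implicit Arguments. Unset Strict Implicit. Unset Printing Implicit Defensive.
Import Order.TTheory GRing.Theory Num.Theory.
Import numFieldNormedType.Exports.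
Local Open Scope classical_set_scope.
Local Open Scope ring_scope.

Section HBsec.
Variables (R : realType) (V : zmodType) (sc : R -> V -> V) (p : V -> R).
Hypotheses (scA : forall a b x, sc a (sc b x) = sc (a*b) x)
  (sc1 : forall x, sc 1 x = x)
  (scDl : forall a b x, sc (a+b) x = sc a x + sc b x)
  (scDr : forall a x y, sc a (x+y) = sc a x + sc a y)
  (pD : forall x y, p (x+y) <= p x + p y)
  (pZ : forall a x, p (sc a x) = `|a| * p x).

Lemma idem0 (z : V) : z + z = z -> z = 0.
Proof. by move=> h; apply: (addrI z); rewrite h addr0. Qed.
Lemma sc0 x : sc 0 x = 0.
Proof. by apply: idem0; rewrite -scDl addr0. Qed.
Lemma scx0 a : sc a 0 = 0.
Proof. by apply: idem0; rewrite -scDr addr0. Qed.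
Lemma scN a x : sc (- a) x = - sc a x.
Proof. by apply: (addrI (sc a x)); rewrite -scDl !subrr sc0. Qed.
Lemma scxN a x : sc a (- x) = - sc a x.
Proof. by apply: (addrI (sc a x)); rewrite -scDr !subrr scx0. Qed.
Lemma scB a b x : sc (a - b) x = sc a x - sc b x.
Proof. by rewrite scDl scN. Qed.
Lemma p0 : p 0 = 0.
Proof. by rewrite -(sc0 0) pZ normr0 mul0r. Qed.
Lemma pN x : p (- x) = p x.
Proof. by rewrite -{1}(sc1 x) -scN pZ normrN normr1 mul1r. Qed.
Lemma p_ge0 x : 0 <= p x.
Proof.
have := pD x (- x); rewrite subrr p0 pN => h.
by rewrite -(pmulr_rge0 _ (ltr0n _ 2)) mulr2n mulrDl mul1r.
Qed.

Variable y0 : V.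

Definition Pg (G : set (V * R)) :=
 [/\ forall x r r', G (x,r) -> G (x,r') -> r = r',
     forall a x r x' r', G (x,r) -> G (x',r') -> G (sc a x + x', a*r + r'),
     forall x r, G (x,r) -> r <= p x
   & G !=set0 -> G (y0, p y0)].

Lemma Pg0 G : Pg G -> G !=set0 -> G (0, 0).
Proof.
case=> _ Gb _ _ [[x r] Gxr].
have := Gb (-1) _ _ _ _ Gxr Gxr.
by rewrite scN sc1 addNr mulN1r addNr.
Qed.

Lemma Pg_chain : exists A, Pg A /\ forall B, A `<` B -> ~ Pg B.
Proof.
apply: Zorn_bigcup => F FP Ftot; split.
- move=> x r r' [X FX Xr] [Y FY Yr].
  have [XY|YX] := Ftot _ _ FX FY.
  + by case: (FP _ FY) => h _ _ _; exact: (h x r r' (XY _ Xr) Yr).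
  + by case: (FP _ FX) => h _ _ _; exact: (h x r r' Xr (YX _ Yr)).
- move=> a x r x' r' [X FX Xr] [Y FY Yr].
  have [XY|YX] := Ftot _ _ FX FY.
  + by exists Y => //; case: (FP _ FY) => _ h _ _; exact: (h a x r x' r' (XY _ Xr) Yr).
  + by exists X => //; case: (FP _ FX) => _ h _ _; exact: (h a x r x' r' Xr (YX _ Yr)).
- by move=> x r [X FX Xr]; case: (FP _ FX) => _ _ h _; apply: h.
- move=> [z [X FX Xz]]; exists X => //.
  by case: (FP _ FX) => _ _ _ h; apply: h; exists z.
Qed.

Definition Lset := [set z : V * R | exists t, z = (sc t y0, t * p y0)].

Lemma PgL : Pg Lset.
Proof.
split.
- move=> x r r' [t [-> ->]] [t' [e ->]].
  have [->//|ne] := eqVneq t t'.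
  have : sc (t - t') y0 = 0 by rewrite scB e subrr.
  move=> /(congr1 (sc (t - t')^-1)); rewrite scA mulVf ?subr_eq0 // sc1 scx0 => ->.
  by rewrite p0 !mulr0.
- move=> a x r x' r' [t [-> ->]] [t' [-> ->]]; exists (a * t + t').
  by rewrite scDl scA mulrDl mulrA.
- move=> x r [t [-> ->]]; rewrite pZ ler_wpM2r ?p_ge0 ?ler_norm //.
- by move=> _; exists 1; rewrite sc1 mul1r.
Qed.

Lemma HB_ext A : Pg A -> (forall B, A `<` B -> ~ Pg B) -> forall v, exists r, A (v, r).
Proof.
move=> PA Amax v; apply: contrapT => nv.
have A0 : A (0, 0).
  apply: Pg0 => //; apply: contrapT => /set0P/negP; rewrite negbK => /eqP A0.
  apply: (Amax Lset _ PgL); rewrite A0; split => // /(_ (sc 1 y0, 1 * p y0)).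
  by move=> h; have [] := h; exists 1.
have [Af Ab Ap Ay] := PA.
pose S := [set d | exists x s, A (x, s) /\ d = s - p (x - v)].
have ubS : forall x' s', A (x', s') -> ubound S (p (x' + v) - s').
  move=> x' s' Ax' _ [x [s [Ax ->]]].
  rewrite lerBrDr addrAC lerBlDr.
  have := Ap _ _ (Ab 1 _ _ _ _ Ax Ax'); rewrite sc1 mul1r => /le_trans; apply.
  have -> : x + x' = (x' + v) + (x - v) by rewrite addrACA subrr addr0 addrC.
  exact: pD.
have S0 : S !=set0 by exists (0 - p (0 - v)), 0, 0.
pose c := sup S.
have c_ub : forall x' s', A (x', s') -> c <= p (x' + v) - s'.
  by move=> x' s' Ax'; apply: ge_sup => //; exact: ubS.
have c_lb : forall x s, A (x, s) -> s - p (x - v) <= c.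
  move=> x s Ax; apply: ub_le_sup; last by exists x, s.
  by exists (p (0 + v) - 0); exact: ubS.
pose A' := [set z : V * R | exists x s t, A (x, s) /\ z = (x + sc t v, s + t * c)].
have AA' : A `<=` A'.
  by move=> [x s] Axs; exists x, s, 0; rewrite sc0 mul0r !addr0.
apply: (Amax A'); first split => //.
  move=> /(_ (v, c)) h.
  have /h : A' (v, c) by exists 0, 0, 1; rewrite sc1 mul1r !add0r.
  by move=> Av; apply: nv; exists c.
split.
- move=> z r r' [x [s [t [Ax [-> ->]]]]] [x' [s' [t' [Ax' []]]]].
  have [<- e|ne e] := eqVneq t t'.
    move=> ->; have ex : x = x' by apply: (addIr (sc t v)).
    by rewrite ex in Ax; rewrite (Af _ _ _ Ax Ax').
  exfalso; apply: nv.
  have : sc (t - t') v = x' - x.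
    by rewrite scB; apply/eqP; rewrite subr_eq addrAC -e addrC addrA addNr add0r.
  move=> /(congr1 (sc (t - t')^-1)); rewrite scA mulVf ?subr_eq0 // sc1 scDr scxN -scN => ->.
  exists ((t - t')^-1 * s' + (- (t - t')^-1) * s).
  by apply: (Ab) => //; rewrite -[_ * s]addr0 -[sc _ x]addr0; apply: (Ab).
- move=> a z r z' r' [x [s [t [Ax [-> ->]]]]] [x' [s' [t' [Ax' [-> ->]]]]].
  exists (sc a x + x'), (a * s + s'), (a * t + t'); split; first exact: Ab.
  congr (_, _).
    by rewrite scDr scA scDl addrACA.
  by rewrite mulrDr mulrDl mulrA addrACA.
- move=> z r [x [s [t [Ax [[-> ->]]]]]].
  have [t0|tn0] := eqVneq t 0.
    by rewrite t0 sc0 mul0r !addr0; exact: Ap.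
  have Asc : forall u, A (sc u x, u * s).
    by move=> u; rewrite -[sc u x]addr0 -[u * s]addr0; apply: (Ab).
  have [tgt|tlt] := ltP 0 t.
    have := c_ub _ _ (Asc t^-1); rewrite -(ler_pM2l tgt) mulrBr mulrA mulfV ?mul1r //.
    have -> : t * p (sc t^-1 x + v) = p (x + sc t v).
      by rewrite -[X in X * _]gtr0_norm // -pZ scDr scA mulfV // sc1.
    by rewrite lerBrDr addrC.
  have tlt' : t < 0 by rewrite lt_neqAle tn0 tlt.
  have nt : 0 < - t by rewrite oppr_gt0.
  have := c_lb _ _ (Asc (- t)^-1); rewrite -(ler_pM2l nt) mulrBr mulrA mulfV ?mul1r ?oppr_eq0 //.
  have -> : - t * p (sc (- t)^-1 x - v) = p (x + sc t v).
    by rewrite -[X in X * _]gtr0_norm // -pZ scDr scA mulfV ?oppr_eq0 // sc1 scxN -scN opprK.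
  rewrite mulNr lerBlDr addrC => h.
  by rewrite -lerBrDr.
- move=> _; exists y0, (p y0), 0; split; first by apply: (Ay); exists (0,0).
  by rewrite sc0 mul0r !addr0.
Qed.

Lemma hahn_banach : exists f : V -> R,
  [/\ forall a x y, f (sc a x + y) = a * f x + f y,
      forall x, f x <= p x & f y0 = p y0].
Proof.
have [A [PA Amax]] := Pg_chain.
have [f Hf] := choice (HB_ext PA Amax).
have [Af Ab Ap Ay] := PA.
exists f; split.
- by move=> a x y; apply: (Af (sc a x + y)) => //; apply: (Ab).
- by move=> x; exact: Ap.
- by apply: (Af y0) => //; apply: (Ay); exists (y0, f y0).
Qed.

End HBsec.

Section Cont.
Variables (K : numFieldType) (Y : normedModType K) (f : Y -> K) (c : K).
Hypotheses (c0 : 0 <= c) (flin : forall (a : K) (x y : Y), f (a *: x + y) = a * f x + f y)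
  (fb : forall z, `|f z| <= c * `|z|).

Lemma lin_bound_dual : dual_elem f.
Proof.
split => // x; apply/cvgrPdist_lt => eps eps0.
have c1 : 0 < c + 1 by rewrite ltr_wpDl.
have fB y : f x - f y = f (x - y).
  have -> : x - y = (-1) *: y + x by rewrite scaleN1r addrC.
  by rewrite flin mulN1r addrC.
near=> y; rewrite fB; apply: (le_lt_trans (fb _)).
apply: (le_lt_trans (y := (c + 1) * `|x - y|)).
  by rewrite ler_wpM2r // lerDl.
rewrite -ltr_pdivlMl //; near: y.
apply: cvgr_dist_lt; first exact: cvg_id.
by rewrite mulr_gt0 // invr_gt0.
Unshelve. all: by end_near.
Qed.
End Cont.

Section Gen.
Variables (K : numFieldType) (conj : K -> K).
Hypotheses (cD : forall a b, conj (a + b) = conj a + conj b)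
  (cM : forall a b, conj (a * b) = conj a * conj b)
  (cn : forall a, conj a * a = `|a| ^+ 2).
Variables (H : normedModType K) (ip : H -> H -> K).
Hypothesis (Hip : is_inner_product conj ip).
Variables (Y : normedModType K) (T : H -> Y).
Hypothesis (Tlin : linear T).

Lemma c0 : conj 0 = 0.
Proof. by apply: (addrI (conj 0)); rewrite -cD !addr0. Qed.
Lemma cN a : conj (- a) = - conj a.
Proof. by apply: (addrI (conj a)); rewrite -cD !subrr c0. Qed.

Lemma ipZD a x y z : ip (a *: x + y) z = a * ip x z + ip y z.
Proof. by case: Hip. Qed.
Lemma ipC x y : ip y x = conj (ip x y).
Proof. by case: Hip. Qed.
Lemma ipn x : ip x x = `|x| ^+ 2.
Proof. by case: Hip. Qed.
Lemma ipD x y z : ip (x + y) z = ip x z + ip y z.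
Proof. by rewrite -[x]scale1r ipZD mul1r scale1r. Qed.
Lemma ip0 z : ip 0 z = 0.
Proof. by apply: (addrI (ip 0 z)); rewrite -ipD !addr0. Qed.
Lemma ipZ a x z : ip (a *: x) z = a * ip x z.
Proof. by rewrite -[a *: x]addr0 ipZD ip0 addr0. Qed.
Lemma ipN x z : ip (- x) z = - ip x z.
Proof. by rewrite -scaleN1r ipZ mulN1r. Qed.
Lemma ipB x y z : ip (x - y) z = ip x z - ip y z.
Proof. by rewrite ipD ipN. Qed.
Lemma ipZr a x z : ip x (a *: z) = conj a * ip x z.
Proof. by rewrite ipC ipZ cM -ipC. Qed.
Lemma ipBr x y z : ip x (y - z) = ip x y - ip x z.
Proof. by rewrite ipC ipB cD cN -!ipC. Qed.
Lemma ip_sum n (F : 'I_n -> H) z :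
  ip (\sum_(i < n) F i) z = \sum_(i < n) ip (F i) z.
Proof. exact: (big_morph (fun v => ip v z) (fun x y => ipD x y z) (ip0 z)). Qed.

Lemma TD x y : T (x + y) = T x + T y.
Proof. by rewrite -[x]scale1r Tlin !scale1r. Qed.
Lemma T0 : T 0 = 0.
Proof. by apply: (addrI (T 0)); rewrite -TD !addr0. Qed.
Lemma TZ a x : T (a *: x) = a *: T x.
Proof. by rewrite -[a *: x]addr0 Tlin T0 addr0. Qed.
Lemma TB x y : T (x - y) = T x - T y.
Proof.
have -> : x - y = (-1) *: y + x by rewrite scaleN1r addrC.
by rewrite Tlin scaleN1r addrC.
Qed.
Lemma T_sum n (F : 'I_n -> H) : T (\sum_(i < n) F i) = \sum_(i < n) T (F i).
Proof. exact: (big_morph T TD T0). Qed.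

Lemma bessel1 x e : ip e e = 1 -> `|ip x e| <= `|x|.
Proof.
move=> ee; set a := ip x e.
have h : ip (x - a *: e) (x - a *: e) = `|x| ^+ 2 - `|a| ^+ 2.
  rewrite ipB ipZ !ipBr !ipZr ee ipn -/a (ipC x e) -/a cn.
  by rewrite mulr1 subrr mulr0 subr0.
have : `|a| ^+ 2 <= `|x| ^+ 2.
  by rewrite -subr_ge0 -h ipn exprn_ge0.
by rewrite ler_pXn2r // nnegrE.
Qed.

Lemma ipn1 x : ip x x = 1 -> `|x| = 1.
Proof. by rewrite ipn => /eqP; rewrite sqrp_eq1 // => /eqP. Qed.

Definition ONL (s : seq H) := forall i j, (i < size s)%N -> (j < size s)%N ->
  ip s`_i s`_j = (i == j)%:R.

Lemma step_ex s M : ONL s -> 0 <= M -> ~ bounded_op T ->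
  exists x, [/\ ip x x = 1, forall i, (i < size s)%N -> ip x s`_i = 0 & M < `|T x|].
Proof.
move=> Os M0 nb; apply: contrapT => nex; apply: nb.
have claim z : (forall i, (i < size s)%N -> ip z s`_i = 0) -> `|T z| <= M * `|z|.
  move=> zo; have [->|z0] := eqVneq z 0; first by rewrite T0 !normr0 mulr0.
  case: (boolP (`|T z| <= M * `|z|)) => // /negP h; exfalso.
  have lt : M * `|z| < `|T z|.
    by rewrite real_ltNge ?ger0_real ?mulr_ge0 //; exact/negP.
  have nz : 0 < `|z| by rewrite normr_gt0.
  apply: nex; exists (`|z|^-1 *: z); split.
  - rewrite ipn normrZ ger0_norm ?invr_ge0 // mulVf ?expr1n //.
    by rewrite gt_eqF.
  - by move=> i Hi; rewrite ipZ zo // mulr0.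
  - by rewrite TZ normrZ ger0_norm ?invr_ge0 // mulrC ltr_pdivlMr // mulrC.
pose C := \sum_(i < size s) `|T s`_i| + M * (1 + (size s)%:R).
exists C => x.
pose a (i : 'I_(size s)) := ip x s`_i.
pose Px := \sum_(i < size s) a i *: s`_i.
have zo : forall j, (j < size s)%N -> ip (x - Px) s`_j = 0.
  move=> j Hj; rewrite ipB ip_sum.
  rewrite (bigD1 (Ordinal Hj)) //= big1 ?addr0.
    by rewrite ipZ Os // eqxx mulr1 subrr.
  move=> i /negPf ne; rewrite ipZ Os //.
  have -> : (val i == j) = false.
    by apply/negbTE; apply: contraFN ne => /eqP e; apply/eqP/val_inj.
  by rewrite mulr0.
have ha i : `|a i| <= `|x| by apply: bessel1; rewrite Os // eqxx.
have hs (i : 'I_(size s)) : `|s`_i| = 1.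
  by apply: ipn1; rewrite Os // eqxx.
rewrite {1}(_ : x = Px + (x - Px)); last by rewrite addrC subrK.
rewrite TD; apply: le_trans (ler_normD _ _) _.
have h1 : `|T Px| <= `|x| * \sum_(i < size s) `|T s`_i|.
  rewrite /Px T_sum; apply: le_trans (ler_norm_sum _ _ _) _.
  rewrite mulr_sumr; apply: ler_sum => i _.
  by rewrite TZ normrZ ler_wpM2r.
have h2 : `|T (x - Px)| <= M * `|x - Px| := claim _ zo.
have h3 : `|x - Px| <= `|x| * (1 + (size s)%:R).
  apply: le_trans (ler_normB _ _) _; rewrite mulrDr mulr1 lerD2l.
  rewrite /Px; apply: le_trans (ler_norm_sum _ _ _) _.
  apply: (le_trans (y := \sum_(i < size s) `|x|)).
    by apply: ler_sum => i _; rewrite normrZ hs mulr1 ha.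
  by rewrite sumr_const card_ord mulr_natr.
rewrite /C mulrDl; apply: lerD; first by rewrite mulrC.
apply: (le_trans h2); rewrite -mulrA [_ * `|x|]mulrC.
by rewrite ler_wpM2l.
Qed.


Hypotheses (norming : forall y : Y, exists g : Y -> K,
   [/\ forall a x z, g (a *: x + z) = a * g x + g z,
        forall z, `|g z| <= `|z| & `|y| <= `|g y|])
  (archi : forall c : K, 0 <= c -> exists n : nat, c <= n%:R).

Lemma gen_main :
  (forall e, orthonormal_seq ip e -> limited (T @` range e)) -> bounded_op T.
Proof.
move=> lim; apply: contrapT => nb.
pose Q (s : seq H) x := [/\ ip x x = 1, forall i, (i < size s)%N -> ip x s`_i = 0
   & (size s).+1%:R < `|T x|].
have stepE s : ONL s -> exists x, Q s x.
  by move=> Os; apply: (step_ex Os (ler0n _ _) nb).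
pose step s := match pselect (exists x, Q s x) with
  left h => projT1 (cid h) | right _ => 0 end.
have stepP s : ONL s -> Q s (step s).
  move=> Os; rewrite /step; case: pselect => [h|]; first exact: (projT2 (cid h)).
  by move/(_ (stepE s Os)).
pose pre n := iter n (fun s => rcons s (step s)) [::].
pose e n := step (pre n).
have size_pre n : size (pre n) = n.
  by elim: n => //= n IH; rewrite size_rcons IH.
have nth_pre n i : (i < n)%N -> (pre n)`_i = e i.
  elim: n => // n IH Hi; rewrite /= nth_rcons size_pre.
  case: ltnP => h; first exact: IH.
  have -> : i = n by apply/eqP; rewrite eqn_leq h -ltnS Hi.
  by rewrite eqxx.
pose P n := forall i j, (i < n)%N -> (j < n)%N -> ip (e i) (e j) = (i == j)%:R.
have ONLpre n : P n -> ONL (pre n).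
  by move=> Pn i j; rewrite size_pre => Hi Hj; rewrite !nth_pre //; exact: Pn.
have Pall n : P n.
  elim: n => [//|n IH] i j Hi Hj.
  have [Q1 Q2 _] := stepP _ (ONLpre n IH).
  have Q2' k : (k < n)%N -> ip (e n) (e k) = 0.
    by move=> Hk; rewrite -(nth_pre n k) // Q2 // size_pre.
  rewrite ltnS leq_eqVlt in Hi; rewrite ltnS leq_eqVlt in Hj.
  case/orP: Hi => [/eqP ->|Hi]; case/orP: Hj => [/eqP ->|Hj].
  - by rewrite eqxx.
  - by rewrite Q2' // (gtn_eqF Hj).
  - by rewrite ipC Q2' // c0 (ltn_eqF Hi).
  - exact: IH.
have orth : orthonormal_seq ip e.
  by move=> i j; apply: (Pall (maxn i j).+1); rewrite ltnS ?leq_maxl ?leq_maxr.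
have bigT n : n.+1%:R < `|T (e n)|.
  by have [_ _] := stepP _ (ONLpre n (Pall n)); rewrite size_pre.
have /choice [g Hg] := fun n => norming (T (e n)).
pose w n : K := (n.+1%:R)^-1.
have w0 n : 0 <= w n by rewrite invr_ge0.
pose f n y := w n * g n y.
have wsn : weak_star_null f.
  split.
    move=> n; apply: (lin_bound_dual (c := w n)) => //.
      by move=> a x z; have [gl _ _] := Hg n; rewrite /f gl mulrDr mulrCA.
    move=> z; have [_ gb _] := Hg n.
    by rewrite /f normrM ger0_norm // ler_wpM2l.
  move=> y; apply/cvgr0Pnorm_lt => eps eps0.
  have [N HN] := archi (divr_ge0 (normr_ge0 y) (ltW eps0)).
  exists N => // n /= Nn.
  have [_ gb _] := Hg n.
  rewrite /f normrM ger0_norm //; apply: (le_lt_trans (ler_wpM2l (w0 n) (gb y))).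
  rewrite /w mulrC ltr_pdivrMr ?ltr0n //.
  rewrite ler_pdivrMr // in HN; apply: (le_lt_trans HN).
  by rewrite mulrC ltr_pM2l // ltr_nat ltnS.
have [N _ HN] := lim e orth f wsn 1 ltr01.
have hA : (T @` range e) (T (e N)) by exists (e N) => //; exists N.
have := HN N (leqnn N) _ hA.
apply/negP; rewrite -real_ltNge ?real1 ?normr_real //.
have [_ _ gy] := Hg N.
rewrite /f normrM ger0_norm //.
apply: (lt_le_trans _ (ler_wpM2l (w0 N) gy)).
by rewrite /w mulrC ltr_pdivlMr ?ltr0n // mul1r.
Qed.
End Gen.

Lemma real_norming (R : realType) (Y : normedModType R) (y : Y) :
  exists g : Y -> R,
   [/\ forall a x z, g (a *: x + z) = a * g x + g z,
        forall z, `|g z| <= `|z| & `|y| <= `|g y|].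
Proof.
have [g [gl gp gy]] := @hahn_banach R Y ( *:%R) (fun v : Y => `|v|)
  (fun a b x => scalerA a b x) (@scale1r _ _) (fun a b x => scalerDl x a b)
  (fun a x z => scalerDr a x z) (@ler_normD _ _) (@normrZ _ _) y.
have g0 : g 0 = 0.
  have h := gl 1 0 0; rewrite scale1r mul1r addr0 in h.
  by apply: (addrI (g 0)); rewrite -h addr0.
have gN z : g (- z) = - g z.
  by rewrite -[- z]addr0 -scaleN1r gl g0 addr0 mulN1r.
exists g; split => //.
  move=> z; rewrite ler_norml gp andbT lerNl -gN.
  by rewrite (le_trans (gp _)) // normrN.
by rewrite gy normr_id.
Qed.


Section Cplx.
Local Open Scope complex_scope.
Variable R : realType.
Local Notation Re := (@complex.Re R).
Local Notation Im := (@complex.Im R).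

Lemma normC_real (c : Cx R) : `|c| = (Re `|c|)%:C.
Proof. by rewrite RRe_real // normr_real. Qed.

Lemma normY_real (Y : normedModType (Cx R)) (v : Y) : `|v| = (Re `|v|)%:C.
Proof. by rewrite RRe_real // normr_real. Qed.

Lemma normCr (r : R) : `|r%:C| = `|r|%:C :> Cx R.
Proof. by rewrite normc_def /= expr0n /= addr0 sqrtr_sqr. Qed.

Lemma cmul (a1 a2 b1 b2 : R) : (a1 +i* a2 : Cx R) * (b1 +i* b2) =
  (a1 * b1 - a2 * b2) +i* (a1 * b2 + a2 * b1).
Proof. by []. Qed.
Lemma cadd (a1 a2 b1 b2 : R) : (a1 +i* a2 : Cx R) + (b1 +i* b2) =
  (a1 + b1) +i* (a2 + b2).
Proof. by []. Qed.

Lemma real_archi (c : R) : 0 <= c -> exists n : nat, c <= n%:R.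
Proof. by move=> c0; eexists; exact: ltW (archi_boundP c0). Qed.

Lemma complex_archi (c : Cx R) : 0 <= c -> exists n : nat, c <= n%:R.
Proof.
move=> c0; have cE : c = (Re c)%:C by rewrite RRe_real // ger0_real.
have [n hn] : exists n : nat, Re c <= n%:R.
  by apply: real_archi; rewrite -ler0c -cE.
by exists n; rewrite cE -(rmorph_nat (real_complex R)) lecR.
Qed.

Lemma complex_norming (Y : normedModType (Cx R)) (y : Y) :
  exists g : Y -> Cx R,
   [/\ forall a x z, g (a *: x + z) = a * g x + g z,
        forall z, `|g z| <= `|z| & `|y| <= `|g y|].
Proof.
pose sc (r : R) (v : Y) := (r%:C : Cx R) *: v.
pose p (v : Y) := Re `|v|.
have scA a b x : sc a (sc b x) = sc (a * b) x by rewrite /sc scalerA rmorphM.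
have sc1 x : sc 1 x = x by rewrite /sc rmorph1 scale1r.
have scDl a b x : sc (a + b) x = sc a x + sc b x by rewrite /sc rmorphD scalerDl.
have scDr a x z : sc a (x + z) = sc a x + sc a z by rewrite /sc scalerDr.
have pD x z : p (x + z) <= p x + p z.
  by have := ler_normD x z; rewrite [`|x + z|]normY_real [`|x|]normY_real [`|z|]normY_real -rmorphD lecR.
have pZ a x : p (sc a x) = `|a| * p x.
  by rewrite /p /sc normrZ normCr {1}[`|x|]normY_real /= mulr0 subr0.
have [g0 [gl gp gy]] := hahn_banach scA sc1 scDl scDr pD pZ y.
have g00 : g0 0 = 0.
  have h := gl 1 0 0; rewrite sc1 mul1r addr0 in h.
  by apply: (addrI (g0 0)); rewrite -h addr0.
have g0D x z : g0 (x + z) = g0 x + g0 z.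
  by rewrite -{1}(sc1 x) gl mul1r.
have g0Z a x : g0 (sc a x) = a * g0 x.
  by rewrite -[sc a x]addr0 gl g00 addr0.
pose ii : Cx R := 0 +i* 1.
pose f (v : Y) : Cx R := (g0 v) +i* (- g0 (ii *: v)).
have e1 a1 a2 : (a1 +i* a2 : Cx R) = a1%:C + a2%:C * ii.
  by apply/eqP; rewrite eq_complex /=; apply/andP; split; apply/eqP; ring.
have flin : forall a x z, f (a *: x + z) = a * f x + f z.
  move=> [a1 a2] x z.
  have ax : (a1 +i* a2) *: x = sc a1 x + sc a2 (ii *: x).
    by rewrite e1 scalerDl -scalerA.
  have iax : ii *: ((a1 +i* a2) *: x) = sc (- a2) x + sc a1 (ii *: x).
    rewrite scalerA.
    have -> : ii * (a1 +i* a2) = (- a2)%:C + a1%:C * ii.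
      by apply/eqP; rewrite eq_complex /=; apply/andP; split; apply/eqP; ring.
    by rewrite scalerDl -scalerA.
  rewrite /f scalerDr iax ax !g0D !g0Z cmul cadd.
  by congr Complex; ring.
have f0 : f 0 = 0.
  by rewrite /f scaler0 g00 oppr0.
have fZ a x : f (a *: x) = a * f x.
  by rewrite -[a *: x]addr0 flin f0 addr0.
have Ref u : Re (f u) = g0 u by [].
exists f; split => //.
  move=> z; set c := f z.
  have [->|c0] := eqVneq c 0; first by rewrite normr0 normr_ge0.
  have nc : 0 < `|c| by rewrite normr_gt0.
  pose w := Num.conj c / `|c|.
  have wc : w * c = `|c|.
    by rewrite /w mulrAC [_ * c]mulrC -normCK expr2 mulfK // gt_eqF.
  have nw : `|w| = 1.
    by rewrite /w normrM normfV normr_id norm_conjC mulfV // gt_eqF.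
  have h : Re `|c| <= Re `|z|.
    rewrite -wc -fZ Ref (le_trans (gp _)) // /p /sc.
    by rewrite normrZ nw mul1r.
  by rewrite normC_real [`|z|]normY_real lecR.
rewrite [`|y|]normY_real; apply: le_trans (normc_ge_Re (f y)).
by rewrite lecR Ref gy real_ler_norm // num_real.
Qed.
End Cplx.


Theorem corollary3 :
  (forall (R : realType) (H Y : completeNormedModType R) (ip : H -> H -> R),
     is_inner_product id ip ->
     forall T : H -> Y, linear T ->
     (forall e : nat -> H, orthonormal_seq ip e -> limited (T @` range e)) ->
     bounded_op T)
  /\
  (forall (R : realType) (H Y : completeNormedModType (Cx R))
          (ip : H -> H -> Cx R),
     is_inner_product Num.conj ip ->
     forall T : H -> Y, linear T ->
     (forall e : nat -> H, orthonormal_seq ip e -> limited (T @` range e)) ->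
     bounded_op T).
Proof.
split.
- move=> R H Y ip Hip T Tlin lim.
  apply: (gen_main _ _ _ Hip Tlin _ _ lim).
  + by [].
  + by [].
  + by move=> a; rewrite /= real_normK ?num_real // expr2.
  + exact: real_norming.
  + exact: real_archi.
- move=> R H Y ip Hip T Tlin lim.
  apply: (gen_main _ _ _ Hip Tlin _ _ lim).
  + by move=> a b; rewrite rmorphD.
  + by move=> a b; rewrite rmorphM.
  + by move=> a; rewrite normCK mulrC.
  + exact: complex_norming.
  + exact: complex_archi.
Qed.
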